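(* Let $0<t_1<t_2$ and $x_1,x_2$ real with $\frac{x_1}{t_1}>\frac{x_2}{t_2}$. Suppose $F_i:[t_1,t_2]\to\mathbb R$, $i\ge1$, are concave, satisfy $F_i'(t)\le\frac{F_i(t)}{t}$ on $[t_1,t_2]$, and $F_i(t_1)=x_1$, $F_i(t_2)=x_2$. Then some subsequence of $(F_i)$ converges, uniformly on every interval $[t_1,t_2']$ with $t_2'<t_2$, to a concave function $F$ with $F'(t)\le\frac{F(t)}{t}$ and $F(t_1)=x_1$. *)

(* Defs.v *)
From HB Require Import structures.
From mathcomp Require Import all_boot all_order all_algebra.
From mathcomp Require Import all_classical all_reals all_analysis.
Set Implicit Arguments. Unset Strict Implicit. Unset Printing Implicit Defensive.
Import Order.TTheory GRing.Theory Num.Theory.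
Import numFieldNormedType.Exports.
Local Open Scope ring_scope.
Local Open Scope classical_set_scope.

Definition concave_on (R : realType) (D : set R) (f : R -> R) : Prop :=
  forall x y l, D x -> D y -> 0 <= l <= 1 ->
    l * f x + (1 - l) * f y <= f (l * x + (1 - l) * y).

Definition right_deriv (R : realType) (f : R -> R) (t d : R) : Prop :=
  (fun h : R => h^-1 * (f (t + h) - f t)) @ at_right 0 --> d.

(* F'(t) <= F(t)/t at t, reading F' as the right derivative. *)
Definition deriv_le_ratio (R : realType) (f : R -> R) (t : R) : Prop :=
  exists d, right_deriv f t d /\ d <= f t / t.

Definition unif_cvg_on (R : realType) (D : set R) (G : nat -> R -> R)
  (g : R -> R) : Prop :=
  forall eps : R, 0 < eps -> exists N : nat, forall k : nat, (N <= k)%N ->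
    forall t, D t -> `|G k t - g t| < eps.

(* Main.v *)
Require Import Defs.
From HB Require Import structures.
From mathcomp Require Import all_boot all_order all_algebra.
From mathcomp Require Import all_classical all_reals all_analysis.
From mathcomp Require Import ring lra.
Import Order.TTheory GRing.Theory Num.Theory.
Import numFieldNormedType.Exports.
Local Open Scope ring_scope.
Local Open Scope classical_set_scope.

Lemma nnorm {R : realDomainType} (x : R) : - `|x| <= x.
Proof. by move: (lexx `|x|); rewrite {1}ler_norml => /andP[]. Qed.

Lemma divle {R : realFieldType} (x y a b : R) : 0 < a -> 0 < b -> x * b <= y * a -> x / a <= y / b.
Proof.
move=> a0 b0 H; rewrite -subr_ge0.
have -> : y / b - x / a = (y * a - x * b) / (a * b) by field; apply/andP; split; rewrite gt_eqF.
by apply: divr_ge0; [rewrite subr_ge0 | apply: mulr_ge0; apply: ltW].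
Qed.
Lemma chord_ge (R : realType) (D : set R) f a b c : concave_on D f -> D a -> D b ->
  a < b -> a <= c <= b -> (c - a) * (f b - f a) <= (b - a) * (f c - f a).
Proof.
move=> cf Da Db ab /andP[ac cb].
have ba : 0 < b - a by rewrite subr_gt0.
pose l := (b - c) / (b - a).
have l01 : 0 <= l <= 1.
  apply/andP; split; first by rewrite /l divr_ge0 // ?subr_ge0 // ltW.
  by rewrite /l ler_pdivrMr // mul1r; lra.
have hc : l * a + (1 - l) * b = c by rewrite /l; field; rewrite gt_eqF.
have H := cf a b l Da Db l01; rewrite hc in H.
have e : (b - a) * (l * f a + (1 - l) * f b) = (b - c) * f a + (c - a) * f b.
  by rewrite /l; field; rewrite gt_eqF.
have := ler_pM2l ba; move=> /(_ (l * f a + (1 - l) * f b) (f c)); rewrite H e => /esym H2.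
nra.
Qed.
Arguments chord_ge {R D f a b} c.

Lemma tangent_le (R : realType) (D : set R) f t u d : concave_on D f -> D t -> D u ->
  t < u -> right_deriv f t d -> f u <= f t + d * (u - t).
Proof.
move=> cf Dt Du tu fd.
have ut : 0 < u - t by rewrite subr_gt0.
have sd : (f u - f t) / (u - t) <= d.
  apply: (cvgr_to_ge fd).
  near=> h.
  have h0 : 0 < h by near: h; exact: nbhs_right_gt.
  have hu : h < u - t by near: h; exact: nbhs_right_lt.
  have := @chord_ge _ _ _ _ _ (t + h) cf Dt Du tu.
  rewrite addrAC subrr add0r.
  have -> : t <= t + h <= u by apply/andP; split; lra.
  move=> /(_ isT) H.
  rewrite [h^-1 * _]mulrC; apply: divle => //; lra.
have := sd; rewrite ler_pdivrMr // => H; lra.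
Unshelve. all: by end_near.
Qed.

Arguments tangent_le {R D f t u d}.

Lemma fbounds (R : realType) (t1 t2 x1 x2 : R) (f : R -> R) :
  0 < t1 -> t1 < t2 -> concave_on [set t | t1 <= t <= t2] f ->
  deriv_le_ratio f t1 -> f t1 = x1 -> f t2 = x2 ->
  forall t, t1 <= t <= t2 ->
   `|f t| <= `|x1| + `|x2| + `|x1 / t1| * (t2 - t1) /\ f t <= x1 + x1 / t1 * (t - t1).
Proof.
move=> t10 t12 cf [d [fd dle]] e1 e2 t /andP[t1t tt2].
have D1 : [set t | t1 <= t <= t2] t1 by rewrite /= lexx ltW.
have D2 : [set t | t1 <= t <= t2] t2 by rewrite /= lexx ltW.
have Dt : [set t | t1 <= t <= t2] t by rewrite /= t1t tt2.
have up : f t <= x1 + x1 / t1 * (t - t1).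
  have [->|tt] := eqVneq t t1; first by rewrite e1 subrr mulr0 addr0.
  have tlt : t1 < t by rewrite lt_neqAle eq_sym tt t1t.
  have := tangent_le cf D1 Dt tlt fd; rewrite e1 => H.
  apply: le_trans H _; rewrite lerD2l; apply: ler_wpM2r; first by rewrite subr_ge0.
  by rewrite -e1.
split=> //.
have lo := chord_ge t cf D1 D2 t12; rewrite t1t tt2 e1 e2 in lo.
have {}lo := lo isT.
set M := x1 / t1 in up *.
have hM := ler_norm M; have hM' := ler_norm x1; have hM'' := ler_norm x2.
have nM := normr_ge0 M; have n1 := normr_ge0 x1; have n2 := normr_ge0 x2.
have hN1 := nnorm x1.
rewrite ler_norml; apply/andP; split; last first.
  have : M * (t - t1) <= `|M| * (t2 - t1).
    apply: le_trans (_ : `|M| * (t - t1) <= _).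
      by apply: ler_wpM2r; rewrite ?subr_ge0.
    by apply: ler_wpM2l => //; lra.
  lra.
have hN2 := nnorm x2.
have p1 : 0 <= (t - t1) * (x2 + `|x2|) by apply: mulr_ge0; lra.
have p2 : 0 <= (t2 - t) * (x1 + `|x1|) by apply: mulr_ge0; lra.
have p3 : 0 <= (t - t1) * `|x1| by apply: mulr_ge0; lra.
have p4 : 0 <= (t2 - t) * `|x2| by apply: mulr_ge0; lra.
have key : 0 <= (t2 - t1) * (f t + `|x1| + `|x2|) by lra.
rewrite pmulr_rge0 in key; last by lra.
have : 0 <= `|x1 / t1| * (t2 - t1) by apply: mulr_ge0; [exact: normr_ge0 | lra].
lra.
Qed.

Definition bnd {R : realType} (t1 t2 x1 x2 : R) := `|x1| + `|x2| + `|x1 / t1| * (t2 - t1).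
Definition lipK {R : realType} (t1 t2 x1 x2 s : R) :=
  `|x1 / t1| + 2 * bnd t1 t2 x1 x2 / (t2 - s).

Lemma flip (R : realType) (t1 t2 x1 x2 s : R) (f : R -> R) :
  0 < t1 -> t1 < t2 -> s < t2 -> concave_on [set t | t1 <= t <= t2] f ->
  deriv_le_ratio f t1 -> f t1 = x1 -> f t2 = x2 ->
  forall a b, t1 <= a <= s -> t1 <= b <= s ->
  `|f b - f a| <= lipK t1 t2 x1 x2 s * `|b - a|.
Proof.
move=> t10 t12 st2 cf fd1 e1 e2.
have fB : forall t, t1 <= t <= t2 ->
   `|f t| <= bnd t1 t2 x1 x2 /\ f t <= x1 + x1 / t1 * (t - t1).
  exact: fbounds.
move=> a b ha hb.
wlog ab : a b ha hb / a <= b.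
  move=> H; case: (leP a b) => [/H|ba]; first by apply.
  by rewrite distrC (distrC b a); apply: H => //; exact: ltW.
have [<-|ab'] := eqVneq a b; first by rewrite !subrr !normr0 mulr0.
have ab2 : a < b by rewrite lt_neqAle ab' ab.
move: ha hb => /andP[t1a as_] /andP[t1b bs].
have D1 : [set t | t1 <= t <= t2] t1 by rewrite /= lexx ltW.
have D2 : [set t | t1 <= t <= t2] t2 by rewrite /= lexx ltW.
have Da : [set t | t1 <= t <= t2] a by rewrite /= t1a /=; lra.
have Db : [set t | t1 <= t <= t2] b by rewrite /= t1b /=; lra.
have [fa _] := fB a Da.
have [_ fbu] := fB b Db.
have [x2B _] := fB t2 D2; rewrite e2 in x2B.
rewrite [`|b - a|]ger0_norm; last by lra.
pose B := bnd t1 t2 x1 x2; pose M := x1 / t1; pose C := 2 * B / (t2 - s).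
rewrite -/B -/M in fa x2B fbu.
rewrite /lipK -/B -/M -/C.
have B0 : 0 <= B by apply: le_trans fa; exact: normr_ge0.
have C0 : 0 <= C by rewrite /C divr_ge0 // ?mulr_ge0 // subr_ge0 ltW.
have hM := ler_norm M; have nM := normr_ge0 M.
have p0 : 0 <= `|M| * (b - a) by apply: mulr_ge0 => //; lra.
have p0' : 0 <= C * (b - a) by apply: mulr_ge0 => //; lra.
rewrite ler_norml; apply/andP; split.
  have cl := chord_ge b cf Da D2 (lt_le_trans ab2 (le_trans bs (ltW st2))).
  rewrite e2 ab /= in cl; have {}cl := cl ltac:(lra).
  move: fa x2B; rewrite !ler_norml => /andP[fa1 fa2] /andP[x21 x22].
  have [fp|fn] := leP 0 (f b - f a).
    have : 0 <= (`|M| + C) * (b - a) by apply: mulr_ge0; lra.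
    lra.
  have p : 0 <= (s - a) * (f a - f b) by apply: mulr_ge0; lra.
  have q : 0 <= (b - a) * (x2 - f a + 2 * B) by apply: mulr_ge0; lra.
  have hC : (t2 - s) * (C * (b - a)) = 2 * B * (b - a).
    by rewrite /C; field; rewrite subr_eq0 gt_eqF.
  have key : 0 <= (t2 - s) * (f b - f a + C * (b - a)) by lra.
  rewrite pmulr_rge0 in key; last by lra.
  lra.
have cu := chord_ge a cf D1 Db (le_lt_trans t1a ab2).
rewrite e1 t1a ab /= in cu; have {}cu := cu isT.
have h1 : (b - a) * (f b - x1) <= (b - a) * (M * (b - t1)).
  by apply: ler_wpM2l; lra.
have h2 : (b - a) * (b - t1) * M <= (b - a) * (b - t1) * `|M|.
  by apply: ler_wpM2l => //; apply: mulr_ge0; lra.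
have key : 0 <= (b - t1) * (`|M| * (b - a) - (f b - f a)) by lra.
rewrite pmulr_rge0 in key; last by lra.
lra.
Qed.

Definition cauchyn {R : realType} (u : nat -> R) := forall e : R, 0 < e ->
  exists N, forall j k, (N <= j)%N -> (N <= k)%N -> `|u j - u k| < e.

Definition incr (f : nat -> nat) := forall n, (f n < f n.+1)%N.

Lemma incr_lt {f} : incr f -> forall m n, (m < n)%N -> (f m < f n)%N.
Proof.
move=> fi m; elim=> // n IH; rewrite ltnS leq_eqVlt => /orP[/eqP->|/IH h].
  exact: fi.
exact: ltn_trans h (fi n).
Qed.

Lemma incr_ge {f} : incr f -> forall n, (n <= f n)%N.
Proof. by move=> fi; elim=> // n IH; apply: leq_ltn_trans IH (fi n). Qed.

Lemma cvg_cauchyn (R : realType) (u : nat -> R) : cvg (u @ \oo) -> cauchyn u.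
Proof.
move=> cu e e0.
have /cvgrPdist_lt H := cu.
have := H (e / 2) ltac:(by rewrite divr_gt0).
case=> N _ HN; exists N => j k Nj Nk.
have h1 := HN j Nj; have h2 := HN k Nk.
rewrite /= in h1 h2.
have := ler_distD (lim (u @ \oo)) (u j) (u k).
rewrite distrC in h1; lra.
Qed.

Lemma cauchyn_cvg (R : realType) (u : nat -> R) : cauchyn u -> cvg (u @ \oo).
Proof.
move=> cu; apply: cauchy_cvg; apply: cauchy_exP => e e0.
have [N HN] := cu e e0; exists (u N); exists N => // k /= Nk.
rewrite -ball_normE /ball_ /=; exact: HN.
Qed.

Lemma cauchyn_sub (R : realType) (v w : nat -> R) K0 : cauchyn v ->
  (forall k, (K0 <= k)%N -> exists r, (k <= r)%N /\ w k = v r) -> cauchyn w.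
Proof.
move=> cv hw e e0; have [N HN] := cv e e0; exists (maxn N K0) => j k.
rewrite !geq_max => /andP[Nj Kj] /andP[Nk Kk].
have [rj [jr ->]] := hw j Kj; have [rk [kr ->]] := hw k Kk.
by apply: HN; [exact: leq_trans jr | exact: leq_trans kr].
Qed.

Fixpoint dsig (T : nat -> (nat -> nat) -> nat -> nat) (m : nat) : nat -> nat :=
  if m is m'.+1 then (fun k => dsig T m' (T m' (dsig T m') k)) else id.

Lemma diag (R : realType) (a : nat -> nat -> R) (B : R) :
  (forall m k, `|a m k| <= B) ->
  exists phi : nat -> nat, incr phi /\ forall m, cauchyn (fun k => a m (phi k)).
Proof.
move=> hB.
have step : forall ms : nat * (nat -> nat), exists tau,
    incr tau /\ cauchyn (fun k => a ms.1 (ms.2 (tau k))).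
  case=> m s /=.
  have hbd : bounded_fun (fun k => a m (s k)).
    rewrite /= /bounded_near.
    near=> M; apply: filterE => n.
    apply: le_trans (hB m (s n)) _;
    near: M; apply: nbhs_pinfty_ge; exact: num_real.
  have [tau ti tc] := @bolzano_weierstrass R (fun k => a m (s k)) hbd.
  exists tau; split; first by move: ti => /increasing_seqP.
  exact: cvg_cauchyn.
have [T0 HT0] := choice step.
pose T m s := T0 (m, s).
have HT : forall m s, incr (T m s) /\ cauchyn (fun k => a m (s (T m s k))).
  by move=> m s; exact: (HT0 (m, s)).
have dinc : forall m, incr (dsig T m).
  elim=> [n //|m IH n /=].
  apply: incr_lt => //; exact: (HT m (dsig T m)).1.
have tail : forall m n k, exists r, (k <= r)%N /\ dsig T (m + n) k = dsig T m r.
  move=> m; elim=> [k|n IH k]; first by exists k; rewrite addn0.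
  rewrite addnS /=.
  have [r [kr ->]] := IH (T (m + n) (dsig T (m + n)) k).
  exists r; split => //; apply: leq_trans kr.
  exact: incr_ge (HT _ _).1 k.
exists (fun k => dsig T k.+1 k); split.
  move=> k.
  have -> : dsig T k.+2 k.+1 = dsig T k.+1 (T k.+1 (dsig T k.+1) k.+1) by [].
  apply: (incr_lt (dinc k.+1)).
  exact: incr_ge (HT _ _).1 k.+1.
move=> m.
apply: (@cauchyn_sub _ (fun k => a m (dsig T m.+1 k)) _ m).
  exact: (HT m (dsig T m)).2.
move=> k mk.
have [r [kr e]] := tail m.+1 (k - m)%N k.
exists r; split => //.
by rewrite -e addSn subnKC.
Unshelve. all: by end_near.
Qed.

Definition gp {R : realType} (t1 t2 : R) (n j : nat) : R :=
  t1 + (minn j n.+1)%:R * ((t2 - t1) / n.+1%:R).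

Lemma gp_in {R : realType} (t1 t2 : R) n j : t1 < t2 -> t1 <= gp t1 t2 n j <= t2.
Proof.
move=> t12; rewrite /gp.
have w0 : 0 < (t2 - t1) / n.+1%:R by rewrite divr_gt0 // subr_gt0.
have hn : n.+1%:R * ((t2 - t1) / n.+1%:R) = t2 - t1 by field; rewrite nat1r pnatr_eq0.
have mj : (minn j n.+1)%:R <= n.+1%:R :> R by rewrite ler_nat geq_minr.
have m0 : 0 <= (minn j n.+1)%:R :> R by exact: ler0n.
have := ler_wpM2r (ltW w0) mj; rewrite hn => h.
have : 0 <= (minn j n.+1)%:R * ((t2 - t1) / n.+1%:R) by apply: mulr_ge0 => //; exact: ltW.
move=> P0; set P := (minn _ _)%:R * _ in h P0 *; apply/andP; split; lra.
Qed.

Lemma lipK_ge0 {R : realType} (t1 t2 x1 x2 s : R) : t1 < t2 -> s < t2 -> 0 <= lipK t1 t2 x1 x2 s.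
Proof.
move=> t12 st2; rewrite /lipK /bnd.
apply: addr_ge0; first exact: normr_ge0.
apply: divr_ge0; last by rewrite subr_ge0 ltW.
apply: mulr_ge0 => //; apply: addr_ge0; first by apply: addr_ge0; exact: normr_ge0.
by apply: mulr_ge0; [exact: normr_ge0 | rewrite subr_ge0 ltW].
Qed.

Lemma unifC (R : realType) (t1 t2 x1 x2 : R) (F : nat -> R -> R) (phi : nat -> nat) :
  0 < t1 -> t1 < t2 -> (forall i, concave_on [set t | t1 <= t <= t2] (F i)) ->
  (forall i, deriv_le_ratio (F i) t1) -> (forall i, F i t1 = x1) -> (forall i, F i t2 = x2) ->
  (forall n j, cauchyn (fun k => F (phi k) (gp t1 t2 n j))) ->
  forall s, s < t2 -> forall e : R, 0 < e -> exists N, forall j k, (N <= j)%N -> (N <= k)%N ->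
    forall t, t1 <= t <= s -> `|F (phi j) t - F (phi k) t| < e.
Proof.
move=> t10 t12 Hc Hd He1 He2 Hcau s st2 e e0.
pose K := lipK t1 t2 x1 x2 s.
have K0 : 0 <= K by exact: lipK_ge0.
have e30 : 0 < e / 3 by rewrite divr_gt0.
pose n := Num.truncn (3 * K * (t2 - t1) / e).
pose w := (t2 - t1) / n.+1%:R.
have w0 : 0 < w by rewrite divr_gt0 // subr_gt0.
have hn : n.+1%:R * w = t2 - t1 by rewrite /w; field; rewrite nat1r pnatr_eq0.
have Kw : K * w < e / 3.
  have X0 : 0 <= 3 * K * (t2 - t1) / e.
    by apply: divr_ge0; [apply: mulr_ge0; [apply: mulr_ge0|rewrite subr_ge0 ltW] | exact: ltW].
  have /andP[_ Xn] := Num.Theory.truncn_itv X0.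
  rewrite -/n in Xn.
  rewrite ltr_pdivrMr // in Xn.
  have : K * w * n.+1%:R = K * (t2 - t1) by rewrite -mulrA [w * _]mulrC hn.
  have : 0 < n.+1%:R :> R by [].
  nra.
have [Nf HNf] := choice (fun m : nat * nat => Hcau m.1 m.2 (e / 3) e30).
exists (\max_(j < n.+2) Nf (n, val j)) => j k Nj Nk t /andP[t1t ts].
pose r := (t - t1) / w.
have r0 : 0 <= r by apply: divr_ge0; [rewrite subr_ge0 | exact: ltW].
have /andP[ir ri] := Num.Theory.truncn_itv r0.
set i := Num.truncn r in ir ri.
have rn : r <= n.+1%:R.
  by rewrite /r ler_pdivrMr // hn; lra.
have iN : (i <= n.+1)%N by rewrite -(ler_nat R); exact: le_trans rn.
have hg : gp t1 t2 n i = t1 + i%:R * w by rewrite /gp (minn_idPl iN).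
have g1 : i%:R * w <= t - t1 by move: ir; rewrite /r ler_pdivlMr.
have g2 : t - t1 < i.+1%:R * w by move: ri; rewrite /r ltr_pdivrMr.
have g2' : t - (t1 + i%:R * w) < w by move: g2; rewrite -addn1 natrD; lra.
have iw0 : 0 <= i%:R * w by apply: mulr_ge0; [exact: ler0n | exact: ltW].
have Ni : (Nf (n, i) <= \max_(j < n.+2) Nf (n, val j))%N.
  exact: (@leq_bigmax _ (fun j : 'I_n.+2 => Nf (n, val j)) (Ordinal (iN : i < n.+2)%N)).
have Hm := HNf (n, i) j k (leq_trans Ni Nj) (leq_trans Ni Nk).
rewrite /= hg in Hm.
have Lip : forall m, `|F m t - F m (t1 + i%:R * w)| < e / 3.
  move=> m.
  have := @flip _ _ _ _ _ _ _ t10 t12 st2 (Hc m) (Hd m) (He1 m) (He2 m)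
    (t1 + i%:R * w) t.
  rewrite t1t ts /=.
  have -> : t1 <= t1 + i%:R * w <= s by apply/andP; split; lra.
  move=> /(_ isT isT) H; apply: le_lt_trans H _.
  rewrite -/K ger0_norm; last by lra.
  apply: le_lt_trans Kw; apply: ler_wpM2l => //; lra.
have L1 := Lip (phi j); have L2 := Lip (phi k).
have := ler_distD (F (phi j) (t1 + i%:R * w)) (F (phi j) t) (F (phi k) t).
have := ler_distD (F (phi k) (t1 + i%:R * w)) (F (phi j) (t1 + i%:R * w)) (F (phi k) t).
rewrite (distrC (F (phi k) (t1 + _)) (F (phi k) t)) in L2 *.
lra.
Qed.

Lemma lim_le_seq {R : realType} (u v : nat -> R) (a b : R) N :
  u @ \oo --> a -> v @ \oo --> b -> (forall k, (N <= k)%N -> u k <= v k) -> a <= b.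
Proof.
move=> hu hv huv; rewrite leNgt; apply/negP => ba.
have e0 : 0 < (a - b) / 2 by rewrite divr_gt0 // subr_gt0.
have /cvgrPdist_lt /(_ _ e0) [N1 _ H1] := hu.
have /cvgrPdist_lt /(_ _ e0) [N2 _ H2] := hv.
pose k := maxn N (maxn N1 N2).
have k1 : (N1 <= k)%N by rewrite /k !leq_max leqnn orbT.
have k2 : (N2 <= k)%N by rewrite /k !leq_max leqnn !orbT.
have k0 : (N <= k)%N by rewrite /k !leq_max leqnn.
have := H1 k k1; have := H2 k k2; have := huv k k0.
rewrite /= !ltr_distl => h0 /andP[h1 h2] /andP[h3 h4].
lra.
Qed.

Arguments lim_le_seq {R u v a b N}.

Theorem lemma5 (R : realType) (t1 t2 x1 x2 : R) (F : nat -> R -> R) :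
  0 < t1 -> t1 < t2 -> x2 / t2 < x1 / t1 ->
  (forall i, concave_on [set t | t1 <= t <= t2] (F i)) ->
  (forall i t, t1 <= t < t2 -> deriv_le_ratio (F i) t) ->
  (forall i, F i t1 = x1) ->
  (forall i, F i t2 = x2) ->
  exists (phi : nat -> nat) (G : R -> R),
    (forall n, (phi n < phi n.+1)%N) /\
    (forall t2', t2' < t2 ->
       unif_cvg_on [set t | t1 <= t <= t2'] (fun k => F (phi k)) G) /\
    concave_on [set t | t1 <= t < t2] G /\
    (forall t, t1 <= t < t2 -> deriv_le_ratio G t) /\
    G t1 = x1.
Proof.
move=> t10 t12 _ Hc Hd He1 He2.
have Hd1 : forall i, deriv_le_ratio (F i) t1 by move=> i; apply: Hd; rewrite lexx.
pose p (m : nat) : R := if @unpickle (nat * nat)%type m is Some nj then gp t1 t2 nj.1 nj.2 else t1.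
have pin : forall m, t1 <= p m <= t2.
  move=> m; rewrite /p; case: (unpickle m) => [[n j]|]; first exact: gp_in.
  by rewrite lexx ltW.
have [phi [phii phic]] := @diag R (fun m k => F k (p m)) (bnd t1 t2 x1 x2)
  (fun m k => (@fbounds _ _ _ _ _ _ t10 t12 (Hc k) (Hd1 k) (He1 k) (He2 k) _ (pin m)).1).
have Hcau : forall n j, cauchyn (fun k => F (phi k) (gp t1 t2 n j)).
  move=> n j; have := phic (pickle (n, j)); by rewrite /p pickleK.
have UC := @unifC _ _ _ _ _ _ _ t10 t12 Hc Hd1 He1 He2 Hcau.
pose G t := lim ((fun k => F (phi k) t) @ \oo).
have conv : forall t, t1 <= t < t2 -> (fun k => F (phi k) t) @ \oo --> G t.
  move=> t /andP[t1t tt2]; apply: cauchyn_cvg => e e0.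
  have [N HN] := UC t tt2 e e0; exists N => j k Nj Nk.
  by apply: HN => //; rewrite t1t lexx.
exists phi, G; split => //.
split.
  move=> t2' t2'lt e e0.
  have e20 : 0 < e / 2 by rewrite divr_gt0.
  have [N HN] := UC t2' t2'lt (e / 2) e20.
  exists N => k Nk t /andP[t1t tt'].
  have ht : t1 <= t < t2 by rewrite t1t /=; exact: le_lt_trans tt' t2'lt.
  have cv := conv t ht.
  have lo : F (phi k) t - e / 2 <= G t.
    apply: (lim_le_seq (N := N) (u := fun _ => F (phi k) t - e / 2) (cvg_cst _) cv).
    move=> j Nj; have := HN k j Nk Nj t; rewrite t1t tt' => /(_ isT).
    by rewrite ltr_distl => /andP[h1 h2]; lra.
  have hi : G t <= F (phi k) t + e / 2.
    apply: (lim_le_seq (N := N) (v := fun _ => F (phi k) t + e / 2) cv (cvg_cst _)).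
    move=> j Nj; have := HN k j Nk Nj t; rewrite t1t tt' => /(_ isT).
    by rewrite ltr_distl => /andP[h1 h2]; lra.
  rewrite ltr_distl; apply/andP; split; lra.
have Gc : concave_on [set t | t1 <= t < t2] G.
  move=> x y l /andP[t1x xt2] /andP[t1y yt2] /andP[l0 l1].
  have hz : t1 <= l * x + (1 - l) * y < t2.
    have a1 : 0 <= l * (x - t1) by apply: mulr_ge0; lra.
    have a2 : 0 <= (1 - l) * (y - t1) by apply: mulr_ge0; lra.
    apply/andP; split; first by lra.
    case: (lerP x y) => xy.
      have : 0 <= l * (y - x) by apply: mulr_ge0; lra.
      lra.
    have : 0 <= (1 - l) * (x - y) by apply: mulr_ge0; lra.
    lra.
  have cx := conv x ltac:(by rewrite t1x xt2).
  have cy := conv y ltac:(by rewrite t1y yt2).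
  apply: (lim_le_seq (N := 0)
    (u := fun k => l * F (phi k) x + (1 - l) * F (phi k) y)
    (v := fun k => F (phi k) (l * x + (1 - l) * y))).
  - exact: (cvgD (cvgM (cvg_cst l) cx) (cvgM (cvg_cst (1 - l)) cy)).
  - exact: conv.
  - move=> k _; apply: Hc; [by rewrite /= t1x ltW | by rewrite /= t1y ltW | by rewrite l0 l1].
split; first exact: Gc.
split; last first.
  rewrite /G.
  have -> : (fun k => F (phi k) t1) = fun _ => x1 by apply: funext => k; exact: He1.
  apply: cvg_lim => //; exact: cvg_cst.
move=> t /andP[t1t tt2].
have t0 : 0 < t by exact: lt_le_trans t10 t1t.
have ht : t1 <= t < t2 by rewrite t1t.
have Gup : forall u, t < u < t2 -> G u * t <= G t * u.
  move=> u /andP[tu ut2].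
  have hu : t1 <= u < t2 by rewrite ut2 (le_trans t1t (ltW tu)).
  apply: (lim_le_seq (N := 0)
    (u := fun k => F (phi k) u * t) (v := fun k => F (phi k) t * u)).
  - exact: (cvgM (conv u hu) (cvg_cst t)).
  - exact: (cvgM (conv t ht) (cvg_cst u)).
  move=> k _.
  have [d [fd dle]] := Hd (phi k) t ht.
  have Dt : [set t | t1 <= t <= t2] t by rewrite /= t1t ltW.
  have Du : [set t | t1 <= t <= t2] u by rewrite /= (le_trans t1t (ltW tu)) ltW.
  have := tangent_le (Hc (phi k)) Dt Du tu fd => tg.
  rewrite ler_pdivlMr // in dle.
  have f1 : 0 <= (F (phi k) t - d * t) * (u - t) by apply: mulr_ge0; lra.
  have f2 : 0 <= (F (phi k) t + d * (u - t) - F (phi k) u) * t by apply: mulr_ge0; lra.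
  lra.
pose q h := h^-1 * (G (t + h) - G t).
have qub : forall h, 0 < h < t2 - t -> q h <= G t / t.
  move=> h /andP[h0 ht2].
  have := Gup (t + h) ltac:(apply/andP; split; lra) => g.
  rewrite /q mulrC; apply: divle => //; lra.
have Dt' : [set t | t1 <= t < t2] t by rewrite /= t1t.
have qmono : forall h h0, 0 < h -> h < h0 -> h0 < t2 - t -> q h0 <= q h.
  move=> h h0 h0' hh0 h0t.
  have D0 : [set t | t1 <= t < t2] (t + h0) by rewrite /=; apply/andP; split; lra.
  have := chord_ge (t + h) Gc Dt' D0 ltac:(lra).
  have -> : t <= t + h <= t + h0 by apply/andP; split; lra.
  move=> /(_ isT) H.
  rewrite /q [_^-1 * _]mulrC [h^-1 * _]mulrC; apply: divle => //; first by lra.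
  lra.
pose S := [set y | exists h, 0 < h < t2 - t /\ y = q h].
have hs : has_sup S.
  split.
    exists (q ((t2 - t) / 2)); exists ((t2 - t) / 2); split => //.
    apply/andP; split; lra.
  by exists (G t / t) => y [h [hh ->]]; exact: qub.
exists (sup S); split; last first.
  apply: ge_sup; first exact: hs.1.
  by move=> y [h [hh ->]]; exact: qub.
apply/cvgrPdist_lt => e e0.
have [y [h0 [/andP[h00 h0t] ->]] dy] := sup_adherent e0 hs.
near=> h.
have h0' : 0 < h by near: h; exact: nbhs_right_gt.
have hh0 : h < h0 by near: h; exact: nbhs_right_lt.
have h1 : q h <= sup S.
  apply: (sup_upper_bound hs); exists h; split => //; apply/andP; split; lra.
have h2 := qmono h h0 h0' hh0 h0t.
change (`|sup S - q h| < e).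
rewrite ger0_norm; lra.
Unshelve. all: by end_near.
Qed.
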